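(* A monomial $f\in k[x_0, \dots, x_{n+1}]$ is in $I_{B_n}^{(m)}$ if and only if \[ \min\{w_{0,S}(f), w_{n+1,S}(f)\}\geq m \quad \text{for all subtrees } S \text{ of } Q_n \text{ with } n-2 \text{ vertices}. \]
   Context: Let $k$ be a field. Let $Q_n$ be an $n$-gon in $\mathbb{R}^2$ with vertices labeled $1,\dots,n$, containing the origin and embedded in $\mathbb{R}^3$, and let $B_n=\mathrm{conv}(Q_n,(0,0,1),(0,0,-1))$ be the bipyramid over $Q_n$, whose two extra vertices $(0,0,1)$ and $(0,0,-1)$ are labeled $0$ and $n+1$. Regard $B_n$ as a simplicial complex on vertices $\{0,1,\dots,n+1\}$ and let $I_{B_n}\subset k[x_0,\dots,x_{n+1}]$ be its Stanley-Reisner ideal, i.e. the ideal generated by the squarefree monomials $\prod_{i\in\tau}x_i$ with $\tau$ a non-face of $B_n$. For a homogeneous ideal $I$, the $m$-th symbolic power is $I^{(m)}=R\cap\bigcap_{P\in \mathrm{Ass}(I)} I^mR_P$. For a subtree $S$ of the $n$-gon $Q_n$ having $n-2$ vertices and a monomial $f=x_0^{a_0}x_1^{a_1}\cdots x_{n+1}^{a_{n+1}}$, define the weights $w_{0,S}(f)=\sum_{i\in S}a_i+a_0$ and $w_{n+1,S}(f)=\sum_{i\in S}a_i+a_{n+1}$ (sums over the vertices of $S$). *)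

(* Defs.v *)
From HB Require Import structures.
From mathcomp Require Import all_boot all_order all_algebra.
From mathcomp Require Import mpoly.

Set Implicit Arguments.
Unset Strict Implicit.
Unset Printing Implicit Defensive.

Import Order.TTheory GRing.Theory.
Local Open Scope ring_scope.

Section Ideals.
Variable R : comNzRingType.

Definition ideal_gen (G : R -> Prop) (f : R) : Prop :=
  exists s : seq (R * R), (forall p, p \in s -> G p.2) /\
                          f = \sum_(p <- s) p.1 * p.2.

Definition ideal_pow (I : R -> Prop) (m : nat) : R -> Prop :=
  ideal_gen (fun g => exists s : seq R,
     [/\ size s = m, (forall x, x \in s -> I x) & g = \prod_(x <- s) x]).

Definition is_ideal (P : R -> Prop) : Prop :=
  [/\ P 0, (forall x y, P x -> P y -> P (x + y)) & (forall r x, P x -> P (r * x))].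

Definition is_prime_ideal (P : R -> Prop) : Prop :=
  [/\ is_ideal P, ~ P 1 & (forall x y, P (x * y) -> P x \/ P y)].

Definition associated_prime (I P : R -> Prop) : Prop :=
  is_prime_ideal P /\ exists g : R, forall h, P h <-> I (h * g).

(* m-th symbolic power  I^(m) = R \cap \bigcap_{P in Ass(I)} I^m R_P.
   Since R is a domain in our application, f/1 \in I^m R_P iff
   s f \in I^m for some s \notin P; we write this out elementwise. *)
Definition symbolic_power (I : R -> Prop) (m : nat) (f : R) : Prop :=
  forall P, associated_prime I P -> exists s : R, ~ P s /\ ideal_pow I m (s * f).

End Ideals.

(* Polygon vertices are 1..n in cyclic order; 0 and n+1 are the apices. *)
Definition polyV (n : nat) (i : 'I_n.+2) : bool := (0 < i <= n)%N.

Definition polyadj (n : nat) (i j : 'I_n.+2) : bool :=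
  [&& polyV i, polyV j &
      [|| (j : nat) == i.+1, (i : nat) == j.+1,
          ((i : nat) == 1%N) && ((j : nat) == n) |
          ((i : nat) == n) && ((j : nat) == 1%N)]].

Definition bipyr_face (n : nat) (t : {set 'I_n.+2}) : bool :=
  [exists i, exists j, polyadj i j &&
     ((t \subset [set ord0; i; j]) || (t \subset [set ord_max; i; j]))].

Definition SR_bipyr (k : fieldType) (n : nat) : {mpoly k[n.+2]} -> Prop :=
  ideal_gen (fun g => exists t : {set 'I_n.+2},
                ~~ bipyr_face t /\ g = \prod_(i in t) 'X_i).

Definition is_subtree (n : nat) (S : {set 'I_n.+2})
    (E : {set {set 'I_n.+2}}) : Prop :=
  [/\ {subset S <= polyV (n:=n)},
      (forall e, e \in E -> exists i j, [/\ polyadj i j, i \in S, j \in S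
                                          & e = [set i; j]]),
      (forall x y, x \in S -> y \in S ->
         connect (fun u v => [set u; v] \in E) x y),
      S != set0 &
      #|E|.+1 = #|S| ].

Definition w0 (n : nat) (S : {set 'I_n.+2}) (a : 'X_{1.. n.+2}) : nat :=
  (\sum_(i in S) a i + a ord0)%N.
Definition wn1 (n : nat) (S : {set 'I_n.+2}) (a : 'X_{1.. n.+2}) : nat :=
  (\sum_(i in S) a i + a ord_max)%N.

Arguments SR_bipyr : clear implicits.
Arguments is_subtree : clear implicits.

(* Main.v *)
Require Import Defs.
From HB Require Import structures.
From mathcomp Require Import all_boot all_order all_algebra.
From mathcomp Require Import mpoly.
From mathcomp Require Import zify ring.
From Stdlib Require Import Classical ClassicalEpsilon.

Set Implicit Arguments.
Unset Strict Implicit.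
Unset Printing Implicit Defensive.
Import Order.TTheory GRing.Theory.
Local Open Scope ring_scope.

Section Alg.
Variable k : fieldType.
Variable N : nat.
Notation Pl := {mpoly k[N]}.
Implicit Types (t : {set 'I_N}) (b c : 'X_{1..N}).
Implicit Types (p q : Pl) (C F : {set 'I_N}) (v : 'I_N).

Definition supp (b : 'X_{1..N}) : {set 'I_N} := [set i | (0 < b i)%N].
Definition mset (t : {set 'I_N}) : 'X_{1..N} := (\sum_(i in t) U_(i))%MM.

Lemma msetE t j : mset t j = (j \in t).
Proof.
rewrite /mset mnm_sumE (eq_bigr (fun i => nat_of_bool (i == j))); last by move=> i _; rewrite mnm1E.
case: (boolP (j \in t)) => jt.
  rewrite (bigD1 j) //= eqxx big1 ?addn0 // => i /andP[_ /negbTE ->] //.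
by rewrite big1 // => i it; case: eqP => // ij; move: jt; rewrite -ij it.
Qed.

Lemma supp_mset t : supp (mset t) = t.
Proof. by apply/setP=> j; rewrite inE msetE; case: (j \in t). Qed.

Lemma suppD b c : supp (b + c)%MM = supp b :|: supp c.
Proof. by apply/setP=> j; rewrite !inE mnmDE addn_gt0. Qed.

Lemma prodX_mset t : \prod_(i in t) ('X_i : Pl) = 'X_[mset t].
Proof. by rewrite mprodXE. Qed.

Lemma mset_le b : (mset (supp b) <= b)%MM.
Proof. by apply/mnm_lepP=> i; rewrite msetE inE; case: (b i). Qed.

Lemma msupp_XM (p : Pl) m c : c \in msupp ('X_[m] * p) -> exists2 b, b \in msupp p & c = (m + b)%MM.
Proof.
rewrite mulrC (perm_mem (msuppMX _ _)) => /mapP[b hb ->]; by exists b.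
Qed.

Lemma msupp_XM2 (p : Pl) m b : b \in msupp p -> (m + b)%MM \in msupp ('X_[m] * p).
Proof. by rewrite mulrC !mcoeff_msupp mcoeffMX. Qed.

Lemma msupp_M (p q : Pl) c : c \in msupp (p * q) ->
  exists b1, exists b2, [/\ b1 \in msupp p, b2 \in msupp q & c = (b1 + b2)%MM].
Proof.
by move/msuppM_le/allpairsP=> [[b1 b2] /= [h1 h2 ->]]; exists b1, b2.
Qed.

Lemma gen0 (G : Pl -> Prop) : ideal_gen G 0.
Proof. by exists [::]; rewrite big_nil. Qed.

Lemma genD (G : Pl -> Prop) p q : ideal_gen G p -> ideal_gen G q -> ideal_gen G (p + q).
Proof.
move=> [s [hs ->]] [s' [hs' ->]]; exists (s ++ s'); rewrite big_cat; split=> //.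
by move=> x; rewrite mem_cat => /orP[/hs|/hs'].
Qed.

Lemma genM (G : Pl -> Prop) r p : ideal_gen G p -> ideal_gen G (r * p).
Proof.
move=> [s [hs ->]]; exists [seq (r * x.1, x.2) | x <- s]; split.
  by move=> x /mapP[y /hs hy ->].
by rewrite big_map mulr_sumr; apply: eq_bigr => x _; rewrite mulrA.
Qed.

Lemma gen1 (G : Pl -> Prop) g : G g -> ideal_gen G g.
Proof. by move=> hg; exists [:: (1, g)]; rewrite big_seq1 mul1r; split=> // x; rewrite inE => /eqP ->. Qed.

Lemma gen_msupp (G : Pl -> Prop) p : (forall b, b \in msupp p -> ideal_gen G 'X_[b]) -> ideal_gen G p.
Proof.
move=> h; rewrite (mpolyE p); move: h; elim: (msupp p) => [|b s ih] h.
  by rewrite big_nil; apply: gen0.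
rewrite big_cons; apply: genD; last by apply: ih => c hc; apply: h; rewrite inE hc orbT.
by rewrite -mul_mpolyC; apply: genM; apply: h; rewrite inE eqxx.
Qed.


Variable face : {set 'I_N} -> bool.
Hypothesis face_down : forall t t', face t -> t' \subset t -> face t'.

Definition Igen : Pl -> Prop :=
  ideal_gen (fun g => exists t, ~~ face t /\ g = \prod_(i in t) 'X_i).

Definition Kp (p : Pl) := forall b, b \in msupp p -> ~~ face (supp b).

Lemma I_K p : Igen p -> Kp p.
Proof.
move=> [s [hs ->]] {p}; elim: s hs => [|[r g] s ih] hs.
  by rewrite big_nil => b; rewrite mcoeff_msupp raddf0 eqxx.
rewrite big_cons => b /msuppD_le; rewrite mem_cat => /orP[|]; last first.
  by apply: ih => x hx; apply: hs; rewrite inE hx orbT.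
have [t [nft ->]] : exists t, ~~ face t /\ g = \prod_(i in t) 'X_i by apply: (hs (r, g)); rewrite inE eqxx.
rewrite prodX_mset => /msupp_M [b1 [b2 [_]]]; rewrite msuppX inE => /eqP -> ->.
apply: contra nft => hf; apply: face_down hf _; rewrite suppD supp_mset; exact: subsetUr.
Qed.

Lemma K_I p : Kp p -> Igen p.
Proof.
move=> h; apply: gen_msupp => b /h nf.
rewrite -(submK (mset_le b)) mpolyXD; apply: genM; apply: gen1.
by exists (supp b); rewrite prodX_mset.
Qed.


Definition wt (C : {set 'I_N}) b := (\sum_(i in C) b i)%N.
Definition Jw (C : {set 'I_N}) (m : nat) p := forall b, b \in msupp p -> (m <= wt C b)%N.

Lemma wtD C b c : wt C (b + c)%MM = (wt C b + wt C c)%N.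
Proof. by rewrite /wt -big_split; apply: eq_bigr => i _; rewrite mnmDE. Qed.

Lemma wt_ge C b i : i \in C -> (b i <= wt C b)%N.
Proof. by move=> iC; rewrite /wt (bigD1 i) //= leq_addr. Qed.

Lemma J0 C m : Jw C m 0.
Proof. by move=> b; rewrite mcoeff_msupp raddf0 eqxx. Qed.

Lemma JD C m p q : Jw C m p -> Jw C m q -> Jw C m (p + q).
Proof. by move=> hp hq b /msuppD_le; rewrite mem_cat => /orP[/hp|/hq]. Qed.

Lemma JB C m p q : Jw C m p -> Jw C m q -> Jw C m (p - q).
Proof.
move=> hp hq b /msuppB_le; rewrite mem_cat => /orP[/hp|/hq] //.
Qed.

Lemma JM C m1 m2 p q : Jw C m1 p -> Jw C m2 q -> Jw C (m1 + m2) (p * q).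
Proof.
move=> hp hq c /msupp_M [b1 [b2 [/hp h1 /hq h2 ->]]].
by rewrite wtD leq_add.
Qed.

Lemma JMl C m r p : Jw C m p -> Jw C m (r * p).
Proof.
move=> hp; have := @JM C 0 m r p; rewrite add0n; apply=> //.
Qed.

Lemma Jle C m m' p : (m' <= m)%N -> Jw C m p -> Jw C m' p.
Proof. by move=> le h b /h; apply: leq_trans. Qed.

Lemma I_J C : (forall t, ~~ face t -> exists2 i, i \in t & i \in C) ->
  forall p, Igen p -> Jw C 1 p.
Proof.
move=> hC p /I_K hK b /hK /hC [i]; rewrite inE => hi iC.
exact: leq_trans hi (wt_ge _ iC).
Qed.

Lemma Ipow_J C : (forall t, ~~ face t -> exists2 i, i \in t & i \in C) ->
  forall m p, ideal_pow Igen m p -> Jw C m p.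
Proof.
move=> hC m p [s [hs ->]] {p}; elim: s hs => [|[r g] s ih] hs.
  rewrite big_nil; exact: J0.
rewrite big_cons; apply: JD; last by apply: ih => x hx; apply: hs; rewrite inE hx orbT.
apply: JMl => /=.
have [l [hsz hl hg]] := hs (r, g) (mem_head _ _); rewrite /= in hg; rewrite hg -hsz.
clear hsz; elim: l hl {hg} => [|x l ihl] hl.
  by move=> b _.
rewrite big_cons /= -add1n; apply: JM.
  by apply: I_J => //; apply: hl; rewrite inE eqxx.
by apply: ihl => y hy; apply: hl; rewrite inE hy orbT.
Qed.


Lemma msupp_sumZX (r : seq 'X_{1..N}) (P : pred 'X_{1..N}) (f : 'X_{1..N} -> k) c :
  c \in msupp (\sum_(b <- r | P b) f b *: ('X_[b] : Pl)) -> (c \in r) && P c.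
Proof.
elim: r => [|b r ih]; first by rewrite big_nil mcoeff_msupp raddf0 eqxx.
rewrite big_cons; case: (boolP (P b)) => Pb; last first.
  by move/ih; rewrite inE => /andP[-> ->]; rewrite orbT.
move/msuppD_le; rewrite mem_cat => /orP[|/ih]; last by rewrite inE => /andP[-> ->]; rewrite orbT.
by move/msuppZ_le; rewrite msuppX inE => /eqP ->; rewrite inE eqxx.
Qed.

Definition part0 C p := \sum_(b <- msupp p | wt C b == 0%N) p@_b *: ('X_[b] : Pl).
Definition part1 C p := \sum_(b <- msupp p | wt C b != 0%N) p@_b *: ('X_[b] : Pl).

Lemma part_split C p : p = part0 C p + part1 C p.
Proof. by rewrite {1}(mpolyE p) (bigID (fun b => wt C b == 0%N)). Qed.

Lemma part1_J C p : Jw C 1 (part1 C p).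
Proof. by move=> b /msupp_sumZX /andP[_]; rewrite lt0n. Qed.

Definition Z0 C p := forall b, b \in msupp p -> wt C b = 0%N.

Lemma part0_Z C p : Z0 C (part0 C p).
Proof. by move=> b /msupp_sumZX /andP[_ /eqP]. Qed.

Lemma Z0M C p q : Z0 C p -> Z0 C q -> Z0 C (p * q).
Proof. by move=> hp hq c /msupp_M [b1 [b2 [/hp h1 /hq h2 ->]]]; rewrite wtD h1 h2. Qed.

Lemma JZ_eq0 C p : Jw C 1 p -> Z0 C p -> p = 0.
Proof.
move=> hj hz; apply: msuppnil0; case E: (msupp p) => [|b s] //.
have hb : b \in msupp p by rewrite E inE eqxx.
by have := hj b hb; rewrite hz.
Qed.

Lemma part0_eq0 C p : part0 C p = 0 -> Jw C 1 p.
Proof. by move=> h; rewrite (part_split C p) h add0r; apply: part1_J. Qed.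

Lemma J_prime C : is_prime_ideal (Jw C 1).
Proof.
split.
- split; first exact: J0.
  + by move=> x y; apply: JD.
  + by move=> r x; apply: JMl.
- rewrite -mpolyX0 => /(_ 0%MM); rewrite msuppX inE eqxx => /(_ isT).
  by rewrite /wt big1 // => i _; rewrite mnm0E.
- move=> p q hpq.
  have e : part0 C p * part0 C q = p * q - (part0 C p * part1 C q + part1 C p * q).
    have key : forall a0 a1 b0 b1 : Pl, a0 * b0 = (a0 + a1) * (b0 + b1) - (a0 * b1 + a1 * (b0 + b1)).
      by move=> a0 a1 b0 b1; ring.
    by rewrite {1}(key (part0 C p) (part1 C p) (part0 C q) (part1 C q)) -!part_split.
  have : part0 C p * part0 C q = 0.
    apply: JZ_eq0; last by apply: Z0M; apply: part0_Z.
    rewrite e; apply: JB => //; apply: JD; first by apply: JMl; exact: part1_J.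
    by rewrite mulrC; apply: JMl; exact: part1_J.
  by move/eqP; rewrite mulf_eq0 => /orP[/eqP/part0_eq0|/eqP/part0_eq0]; [left|right].
Qed.


Lemma wt0_supp C c : wt C c = 0%N -> forall i, i \in C -> c i = 0%N.
Proof. by move=> h i iC; apply/eqP; rewrite -leqn0 -h wt_ge. Qed.

Lemma wt_pos C c : (0 < wt C c)%N -> exists2 v, v \in C & (0 < c v)%N.
Proof.
move=> h; case: (boolP [exists v, (v \in C) && (0 < c v)%N]).
  by move/existsP=> [v /andP[h1 h2]]; exists v.
move/existsPn=> H; move: h; rewrite /wt big1 // => i iC.
by apply/eqP; move: (H i); rewrite iC /= lt0n negbK.
Qed.

Lemma nface_up t t' : ~~ face t -> t \subset t' -> ~~ face t'.
Proof. by move=> nf sub; apply: contra nf => hf; apply: face_down hf sub. Qed.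

Lemma assoc_J (F : {set 'I_N}) : face F -> (forall v, v \notin F -> ~~ face (v |: F)) ->
  associated_prime Igen (Jw (~: F) 1).
Proof.
move=> fF hF; split; first exact: J_prime.
exists 'X_[mset F] => h; split.
- move=> hJ; apply: K_I => b; rewrite mulrC => /msupp_XM [c hc ->].
  have [v] := wt_pos (hJ c hc); rewrite inE => vF cv.
  apply: nface_up (hF v vF) _; rewrite suppD supp_mset.
  apply/subsetP=> x; rewrite !inE => /orP[/eqP ->|->]; last by [].
  by rewrite cv orbT.
- rewrite mulrC; move/I_K => hK c hc; rewrite lt0n; apply/negP => /eqP w0.
  have := hK _ (msupp_XM2 (mset F) hc); rewrite suppD supp_mset.
  suff -> : F :|: supp c = F by rewrite fF.
  apply/setP=> x; rewrite !inE; case: (boolP (x \in F)) => //= xF.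
  by rewrite (wt0_supp w0) // inE.
Qed.

Lemma supp_U (u : 'I_N) : supp U_(u) = [set u].
Proof. by apply/setP=> x; rewrite !inE mnm1E; case: eqP => [->|]; rewrite ?eqxx // => /nesym /eqP /negbTE ->. Qed.

Lemma Kp_dec p : Kp p <-> all (fun b => ~~ face (supp b)) (msupp p).
Proof. by split; [move=> h; apply/allP => b /h | move/allP]. Qed.


Lemma notP_prod (Pr : Pl -> Prop) : is_prime_ideal Pr -> forall (F : {set 'I_N}),
  (forall v, v \in F -> ~ Pr 'X_v) -> forall m, ~ Pr 'X_[mset F *+ m].
Proof.
move=> [_ n1 pr] F hF m.
have nM : forall x y, ~ Pr x -> ~ Pr y -> ~ Pr (x * y).
  by move=> x y hx hy /pr [].
rewrite -mpolyXn -prodX_mset; elim: m => [|m ih]; first by rewrite expr0.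
rewrite exprS; apply: (nM) => //.
apply: (big_ind (fun x => ~ Pr x)); [exact: n1 | exact: nM | exact: hF].
Qed.

Lemma assoc_facet (Pr : Pl -> Prop) : associated_prime Igen Pr -> exists F : {set 'I_N},
  [/\ face F, (forall v, v \notin F -> ~~ face (v |: F)) & (forall m, ~ Pr 'X_[mset F *+ m])].
Proof.
move=> [hpr [g hg]].
pose F := [set v | if excluded_middle_informative (Pr 'X_v) then false else true].
have memF : forall v, v \in F <-> ~ Pr 'X_v.
  by move=> v; rewrite inE; case: excluded_middle_informative.
have nmemF : forall v, v \notin F -> Pr 'X_v.
  by move=> v; rewrite inE; case: excluded_middle_informative.
have hnP := notP_prod hpr (fun v => proj1 (memF v)).
have hnI : ~ Igen ('X_[mset F] * g).
  move=> H; apply: (hnP 1%N); rewrite mulm1n; apply/(proj2 (hg _)); by [].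
have : ~~ all (fun b => ~~ face (supp b)) (msupp ('X_[mset F] * g)).
  by apply/negP => /Kp_dec /K_I /hnI.
case/allPn => b /msupp_XM [c hc ->]; rewrite negbK suppD supp_mset => fD.
have hu : forall u, u \notin F -> ~~ face (u |: supp c).
  move=> u /nmemF /(proj1 (hg _)) /I_K hK.
  by have := hK _ (msupp_XM2 U_(u) hc); rewrite suppD supp_U.
have DF : supp c \subset F.
  apply/subsetP => u uc; apply/negPn/negP => uF.
  have := hu u uF; rewrite (face_down fD) //.
  by apply/subsetP => x; rewrite in_setU1 => /orP[/eqP ->|xc]; rewrite in_setU ?uc ?xc orbT.
exists F; split=> //.
- by apply: face_down fD _; apply: subsetUl.
- move=> v vF; apply: nface_up (hu v vF) _; exact: setUS.
Qed.


Lemma wtU C v : v \in C -> wt C U_(v) = 1%N.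
Proof.
move=> vC; rewrite /wt (bigD1 v) //= mnm1E eqxx big1 // => i /andP[_ iv].
by rewrite mnm1E eq_sym (negbTE iv).
Qed.

Lemma msetU1 F v : v \notin F -> mset (v |: F) = (mset F + U_(v))%MM.
Proof.
move=> vF; apply/mnmP => i; rewrite mnmDE !msetE mnm1E in_setU1.
case: (eqVneq i v) => [->|iv]; first by rewrite (negbTE vF).
by rewrite addn0.
Qed.

Lemma pow_build_aux F : (forall v, v \notin F -> ~~ face (v |: F)) -> forall m a,
  (m <= wt (~: F) a)%N -> exists r, exists s : seq Pl,
  [/\ size s = m, forall x, x \in s -> Igen x &
      'X_[mset F *+ m] * 'X_[a] = 'X_[r] * \prod_(x <- s) x].
Proof.
move=> hF; elim=> [|m ih] a ha.
  by exists a, [::]; rewrite big_nil mulm0n mpolyX0 mul1r mulr1.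
have [v vF av] := wt_pos (leq_trans (ltn0Sn m) ha).
have le : (U_(v) <= a)%MM.
  by apply/mnm_lepP => i; rewrite mnm1E; case: eqP => [<-|].
set a' := (a - U_(v))%MM.
have ea : a = (a' + U_(v))%MM by rewrite submK.
have ha' : (m <= wt (~: F) a')%N.
  by move: ha; rewrite ea wtD wtU // addn1 ltnS.
have [r [s [hs hI he]]] := ih a' ha'.
have vF' : v \notin F by move: vF; rewrite inE.
exists r, ('X_[mset (v |: F)] :: s); split.
- by rewrite /= hs.
- move=> x; rewrite inE => /orP[/eqP ->|/hI //].
  by apply: gen1; exists (v |: F); rewrite prodX_mset; split=> //; apply: hF.
- rewrite big_cons ea mulmS (msetU1 vF') !mpolyXD.
  have -> : 'X_[mset F] * 'X_[mset F *+ m] * ('X_[a'] * 'X_[U_(v)]) =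
            ('X_[mset F] * 'X_[U_(v)]) * ('X_[mset F *+ m] * 'X_[a']) :> Pl by ring.
  by rewrite he; ring.
Qed.

Lemma pow_build F : (forall v, v \notin F -> ~~ face (v |: F)) -> forall m a,
  (m <= wt (~: F) a)%N -> ideal_pow Igen m ('X_[mset F *+ m] * 'X_[a]).
Proof.
move=> hF m a ha; have [r [s [hs hI ->]]] := pow_build_aux hF ha.
exists [:: ('X_[r], \prod_(x <- s) x)]; rewrite big_seq1; split=> // x.
by rewrite inE => /eqP -> /=; exists s.
Qed.


Lemma sym_to_wt F m a : face F -> (forall v, v \notin F -> ~~ face (v |: F)) ->
  symbolic_power Igen m ('X_[a] : Pl) -> (m <= wt (~: F) a)%N.
Proof.
move=> fF hF H.
have [s [ns hs]] := H _ (assoc_J fF hF).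
have hC : forall t, ~~ face t -> exists2 i, i \in t & i \in ~: F.
  move=> t nt; case: (boolP [exists i, (i \in t) && (i \in ~: F)]).
    by move/existsP => [i /andP[h1 h2]]; exists i.
  move/existsPn => hn; move: nt; rewrite (face_down fF) //.
  by apply/subsetP => i it; move: (hn i); rewrite it inE /= negbK.
have hJ := Ipow_J hC hs.
have : ~~ all (fun b => 1 <= wt (~: F) b)%N (msupp s).
  by apply/negP => /allP hall; apply: ns => b /hall.
case/allPn => b hb; rewrite -ltnNge ltnS leqn0 => /eqP wb.
move: hJ; rewrite mulrC => /(_ _ (msupp_XM2 a hb)).
by rewrite wtD wb addn0.
Qed.


Lemma wt_to_sym m a :
  (forall F, face F -> (forall v, v \notin F -> ~~ face (v |: F)) -> (m <= wt (~: F) a)%N) ->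
  symbolic_power Igen m ('X_[a] : Pl).
Proof.
move=> h Pr hP; have [F [fF hF nP]] := assoc_facet hP.
exists 'X_[mset F *+ m]; split; first exact: nP.
by apply: pow_build => //; apply: h.
Qed.

End Alg.

Local Close Scope ring_scope.

Definition fpos (m y k : nat) : nat := if (y + k + 1 <= m)%N then (y + k + 1)%N else (y + k + 1 - m)%N.
Section F.
Variables (m x y : nat).
Hypothesis hm : (3 <= m)%N.
Hypothesis hx : (0 < x <= m)%N.
Hypothesis hxy : ((y = x.+1 /\ x < m) \/ (x = m /\ y = 1))%N.
Lemma f1 k : (k < m - 2)%N -> (0 < fpos m y k <= m)%N.
Proof. rewrite /fpos; case: ifP; lia. Qed.
Lemma f2 k : (k < m - 2)%N -> fpos m y k <> x /\ fpos m y k <> y.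
Proof. rewrite /fpos; case: ifP; lia. Qed.
Lemma f3 k l : (k < m - 2)%N -> (l < m - 2)%N -> fpos m y k = fpos m y l -> k = l.
Proof. rewrite /fpos; case: ifP; case: ifP; lia. Qed.
Lemma f4 k : (k.+1 < m - 2)%N -> fpos m y k.+1 = (fpos m y k).+1 \/ (fpos m y k = m /\ fpos m y k.+1 = 1%N).
Proof. rewrite /fpos; case: ifP; case: ifP; lia. Qed.
End F.

Section Comb.
Variable n : nat.
Hypothesis hn : (3 <= n)%N.
Implicit Types (t F S : {set 'I_n.+2}) (i j v : 'I_n.+2).

Lemma bface_down t t' : bipyr_face t -> t' \subset t -> bipyr_face t'.
Proof.
move=> /existsP[i /existsP[j /andP[adj hor]]] sub.
apply/existsP; exists i; apply/existsP; exists j; rewrite adj /=.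
by case/orP: hor => h; rewrite (subset_trans sub h) ?orbT.
Qed.

Lemma card3_le (x y z : 'I_n.+2) : (#|[set x; y; z]| <= 3)%N.
Proof.
apply: leq_trans (leq_card_setU _ _) _; rewrite cards1.
apply: (@leq_trans (2 + 1)) => //; rewrite leq_add2r.
by apply: leq_trans (leq_card_setU _ _) _; rewrite !cards1.
Qed.

Lemma bface_card t : bipyr_face t -> (#|t| <= 3)%N.
Proof.
move=> /existsP[i /existsP[j /andP[_ /orP[]]]] /subset_leq_card h;
  exact: leq_trans h (card3_le _ _ _).
Qed.

Lemma polyadj_sym i j : polyadj i j = polyadj j i.
Proof.
rewrite /polyadj andbCA; congr (_ && (_ && _)); rewrite orbCA; congr (_ || (_ || _)).
by rewrite orbC andbC [X in _ || X]andbC.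
Qed.

Lemma polyadj_nat i j : polyadj i j ->
  [/\ (0 < i)%N, (i <= n)%N, (0 < j)%N, (j <= n)%N &
    [\/ (j : nat) = i.+1, (i : nat) = j.+1, (i : nat) = 1%N /\ (j : nat) = n |
        (i : nat) = n /\ (j : nat) = 1%N]].
Proof.
rewrite /polyadj /polyV => /and3P[/andP[i0 iN] /andP[j0 jN] h]; split=> //.
case/or4P: h => [/eqP|/eqP|/andP[/eqP ? /eqP ?]|/andP[/eqP ? /eqP ?]]; by [constructor 1|constructor 2|constructor 3|constructor 4].
Qed.

Lemma polyadj_neq i j : polyadj i j -> i != j.
Proof.
move=> /polyadj_nat [? ? ? ? h]; apply/negP => /eqP e; subst j.
case: h; lia.
Qed.

Lemma facet_props (x i j : 'I_n.+2) : (x = ord0 \/ x = ord_max) -> polyadj i j ->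
  bipyr_face [set x; i; j] /\ (forall v, v \notin [set x; i; j] -> ~~ bipyr_face (v |: [set x; i; j])).
Proof.
move=> hx adj; split.
  apply/existsP; exists i; apply/existsP; exists j; rewrite adj /=.
  by case: hx => ->; rewrite subxx ?orbT.
have [? ? ? ? _] := polyadj_nat adj.
have c3 : #|[set x; i; j]| = 3.
  rewrite -setUA cardsU1 cards2 (polyadj_neq adj) !inE.
  have xi : x != i by apply/eqP => e; subst; case: hx => e; move: (congr1 val e) => /=; lia.
  have xj : x != j by apply/eqP => e; subst; case: hx => e; move: (congr1 val e) => /=; lia.
  by rewrite (negbTE xi) (negbTE xj).
move=> v vF; apply/negP => /bface_card; rewrite cardsU1 vF c3.
by [].
Qed.

Definition PVs := [set v : 'I_n.+2 | polyV v].

Lemma notPV v : ~~ polyV v -> v = ord0 \/ v = ord_max.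
Proof.
rewrite /polyV => h; have := ltn_ord v.
case: (eqVneq (v : nat) 0%N) => [e|ne] lt; [left|right]; apply/val_inj => /=; lia.
Qed.

Lemma PV_ne v : polyV v -> v != ord0 /\ v != ord_max.
Proof.
rewrite /polyV => h; split; apply/eqP => e; move: h; rewrite e /=; lia.
Qed.

Lemma card_PV : #|PVs| = n.
Proof.
have e : ~: PVs = [set ord0; ord_max].
  apply/setP => v; rewrite !inE; case: (boolP (polyV v)) => h /=.
    by have [/negbTE -> /negbTE ->] := PV_ne h.
  by case: (notPV h) => ->; rewrite eqxx ?orbT.
have := cardsC PVs; rewrite e cards2 card_ord.
have -> : (ord0 != ord_max :> 'I_n.+2) by apply/eqP => /(congr1 val) /=.
by move=> h; apply/eqP; rewrite -(eqn_add2r 2) h addn2.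
Qed.

Lemma val_neq (u w : 'I_n.+2) : u != w -> (u : nat) != w.
Proof. by apply: contra => /eqP e; apply/eqP/val_inj. Qed.


Lemma arc_nat (i j u v m : nat) : u != i -> u != j -> v != i -> v != j ->
  (0 < i)%N -> (j <= m)%N ->
  [\/ v = u.+1, u = v.+1, u = 1%N /\ v = m | u = m /\ v = 1%N] ->
  ((i < u) && (u < j))%N = ((i < v) && (v < j))%N.
Proof.
move=> /eqP ? /eqP ? /eqP ? /eqP ? ? ? h.
apply/idP/idP => /andP[h1 h2]; apply/andP; case: h => [?|?|[? ?]|[? ?]]; lia.
Qed.

Lemma arc_final (i j m : nat) : (i < j)%N -> (0 < i)%N -> (j <= m)%N -> j != i.+1 ->
  ~ (i = 1%N /\ j = m) ->
  ((i < i.+1) && (i.+1 < j))%N = ((i < (if (1 < i)%N then 1%N else m)) && ((if (1 < i)%N then 1%N else m) < j))%N -> False.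
Proof.
move=> ? ? ? /eqP ? nn; case: ifP => h e.
  by move: e; rewrite ltnSn /=; lia.
have ? : i = 1%N by lia.
have ? : (j < m)%N by apply/negPn/negP => hh; apply: nn; split; lia.
by move: e; rewrite ltnSn /=; lia.
Qed.

Lemma adj_key S E i j : is_subtree n S E -> (i < j)%N -> polyV i -> polyV j ->
  i \notin S -> j \notin S -> (forall v, polyV v -> v \notin S -> v = i \/ v = j) -> polyadj i j.
Proof.
move=> [Ssub Eedge Sconn _ _] ij Pi Pj iS jS hout.
apply/negPn/negP => nadj.
have [i0 iN] : (0 < i)%N /\ (i <= n)%N by move: Pi => /andP[].
have [j0 jN] : (0 < j)%N /\ (j <= n)%N by move: Pj => /andP[].
have ji1 : (j : nat) != i.+1.
  apply/eqP => e; move: nadj; rewrite /polyadj Pi Pj e eqxx //.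
have i1jn : ~ ((i : nat) = 1%N /\ (j : nat) = n).
  move=> [e1 e2]; move: nadj; rewrite /polyadj Pi Pj e1 e2 !eqxx /= !orbT //.
have inS : forall v, polyV v -> (v : nat) != i -> (v : nat) != j -> v \in S.
  move=> v Pv vi vj; apply/negPn/negP => vS; case: (hout v Pv vS) => e; subst v.
    by rewrite eqxx in vi.
  by rewrite eqxx in vj.
pose x : 'I_n.+2 := inord i.+1.
have xv : (x : nat) = i.+1 by rewrite inordK //; lia.
have xS : x \in S.
  by apply: inS; rewrite ?/polyV xv; lia.
pose y : 'I_n.+2 := if (1 < i)%N then inord 1 else inord n.
have yv : (y : nat) = (if (1 < i)%N then 1 else n)%N.
  by rewrite /y; case: ifP => _; rewrite inordK //; lia.
have yS : y \in S.
  apply: inS; rewrite ?/polyV yv; case: ifP => h; try lia.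
pose A := [pred v : 'I_n.+2 | (i < v)%N && (v < j)%N].
have cl : closed (fun u v => [set u; v] \in E) A.
  move=> u v /Eedge [i' [j' [adj' i'S j'S e]]].
  have uS : u \in S.
    have : u \in [set u; v] by rewrite !inE eqxx.
    by rewrite e !inE => /orP[/eqP ->|/eqP ->].
  have vS : v \in S.
    have : v \in [set u; v] by rewrite !inE eqxx orbT.
    by rewrite e !inE => /orP[/eqP ->|/eqP ->].
  case: (eqVneq u v) => [-> //|uv].
  have adj : polyadj u v.
    have : u \in [set i'; j'] by rewrite -e !inE eqxx.
    have : v \in [set i'; j'] by rewrite -e !inE eqxx orbT.
    rewrite !inE => /orP[/eqP ev|/eqP ev] /orP[/eqP eu|/eqP eu]; subst.
    + by rewrite eqxx in uv.
    + by rewrite polyadj_sym.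
    + by [].
    + by rewrite eqxx in uv.
  have ui : (u : nat) != i by apply: val_neq; apply: contraNneq iS => <-.
  have uj : (u : nat) != j by apply: val_neq; apply: contraNneq jS => <-.
  have vi : (v : nat) != i by apply: val_neq; apply: contraNneq iS => <-.
  have vj : (v : nat) != j by apply: val_neq; apply: contraNneq jS => <-.
  have [? ? ? ? h] := polyadj_nat adj.
  by rewrite !inE /=; apply: arc_nat h.
have := closed_connect cl (Sconn x y xS yS).
rewrite !inE /= xv yv; exact: arc_final.
Qed.


Lemma subtree_compl S E : is_subtree n S E -> #|S| = (n - 2)%N ->
  exists i j, polyadj i j /\ PVs :\: S = [set i; j].
Proof.
move=> st cS; have [Ssub _ _ _ _] := st.
have SP : S \subset PVs by apply/subsetP => v /Ssub; rewrite inE.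
have c2 : #|PVs :\: S| == 2.
  by rewrite cardsD (setIidPr SP) card_PV cS; apply/eqP; lia.
case/cards2P: c2 => i [j [ij e]].
have hi : i \in PVs :\: S by rewrite e !inE eqxx.
have hj : j \in PVs :\: S by rewrite e !inE eqxx orbT.
move: (hi) (hj); rewrite !inE => /andP[iS Pi] /andP[jS Pj].
have hout : forall v, polyV v -> v \notin S -> v = i \/ v = j.
  move=> v Pv vS; have : v \in PVs :\: S by rewrite !inE vS.
  by rewrite e !inE => /orP[/eqP|/eqP]; [left|right].
exists i, j; split=> //.
case: (ltngtP i j) => h.
- exact: adj_key st h Pi Pj iS jS hout.
- rewrite polyadj_sym; apply: adj_key st h Pj Pi jS iS _.
  by move=> v Pv vS; case: (hout v Pv vS); [right|left].
- by move: ij; rewrite (val_inj h) eqxx.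
Qed.


Lemma path_from (x y : 'I_n.+2) : polyV x ->
  (((y : nat) = x.+1 /\ (x < n)%N) \/ ((x : nat) = n /\ (y : nat) = 1%N)) ->
  exists S E, [/\ is_subtree n S E, #|S| = (n - 2)%N, x \notin S & y \notin S].
Proof.
move=> Px hxy.
have hx : (0 < x <= n)%N by [].
pose vtx (k : nat) : 'I_n.+2 := inord (fpos n y k).
have vtxE : forall k, (k < n - 2)%N -> (vtx k : nat) = fpos n y k.
  by move=> k hk; rewrite inordK //; have := f1 hn hx hxy hk; lia.
have vtxP : forall k, (k < n - 2)%N -> polyV (vtx k).
  by move=> k hk; have := f1 hn hx hxy hk; rewrite /polyV vtxE.
have vtx_inj : forall k l, (k < n - 2)%N -> (l < n - 2)%N -> vtx k = vtx l -> k = l.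
  move=> k l hk hl e; apply: (f3 hn hx hxy hk hl).
  by rewrite -vtxE // -vtxE // e.
pose S := [set vtx (val k) | k : 'I_(n - 2)].
pose E := [set [set vtx (val k); vtx (val k).+1] | k : 'I_(n - 3)].
have inS : forall k, (k < n - 2)%N -> vtx k \in S.
  by move=> k hk; apply/imsetP; exists (Ordinal hk).
have memS : forall v, v \in S -> exists2 k, (k < n - 2)%N & v = vtx k.
  by move=> v /imsetP[k _ ->]; exists (val k); [exact: ltn_ord | by []].
have adjk : forall k, (k.+1 < n - 2)%N -> polyadj (vtx k) (vtx k.+1).
  move=> k hk; have hk' : (k < n - 2)%N by lia.
  rewrite /polyadj vtxP // vtxP //= !vtxE //.
  by case: (f4 hn hx hxy hk) => [->|[-> ->]]; rewrite ?eqxx ?orbT.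
have esym : forall u w, ([set u; w] \in E) = ([set w; u] \in E) by move=> u w; rewrite setUC.
have csym : connect_sym (fun u w => [set u; w] \in E).
  by apply: sym_connect_sym => u w; apply: esym.
have inE' : forall k, (k.+1 < n - 2)%N -> [set vtx k; vtx k.+1] \in E.
  move=> k hk; have hk' : (k < n - 3)%N by lia.
  by apply/imsetP; exists (Ordinal hk').
have c0 : forall k, (k < n - 2)%N -> connect (fun u w => [set u; w] \in E) (vtx 0) (vtx k).
  elim=> [|k ih] hk; first exact: connect0.
  apply: connect_trans (ih _) _; first lia.
  by apply: connect1; apply: inE'.
have injS : injective (fun k : 'I_(n - 2) => vtx (val k)).
  by move=> k l e; apply/val_inj; apply: (vtx_inj) e; exact: ltn_ord.
have injE : injective (fun k : 'I_(n - 3) => [set vtx (val k); vtx (val k).+1]).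
  move=> k l /= e; apply/val_inj.
  have hk := ltn_ord k; have hl := ltn_ord l.
  have h1 : vtx k \in [set vtx l; vtx l.+1] by rewrite -e !inE eqxx.
  have h2 : vtx l \in [set vtx k; vtx k.+1] by rewrite e !inE eqxx.
  move: h1 h2; rewrite !inE => /orP[/eqP|/eqP] e1 /orP[/eqP|/eqP] e2.
  - by apply: (vtx_inj) e1; lia.
  - by apply: (vtx_inj) e1; lia.
  - by symmetry; apply: (vtx_inj) e2; lia.
  - have := vtx_inj _ _ _ _ e1; have := vtx_inj _ _ _ _ e2; lia.
exists S, E; split.
- split.
  + by move=> v /memS [kk hk ->]; apply: vtxP.
  + move=> e /imsetP[k _ ->]; exists (vtx k), (vtx k.+1); split=> //.
    * by apply: adjk; have := ltn_ord k; lia.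
    * by apply: inS; have := ltn_ord k; lia.
    * by apply: inS; have := ltn_ord k; lia.
  + move=> u w /memS[k hk ->] /memS[l hl ->].
    apply: connect_trans (c0 l hl); rewrite csym; exact: c0.
  + by apply/set0Pn; exists (vtx 0); apply: inS; lia.
  + rewrite !card_imset ?card_ord //; lia.
- by rewrite card_imset ?card_ord.
- apply/negP => /memS[k hk e]; have [h1 h2] := f2 hn hx hxy hk; apply: h1.
  by rewrite -vtxE // -e.
- apply/negP => /memS[k hk e]; have [h1 h2] := f2 hn hx hxy hk; apply: h2.
  by rewrite -vtxE // -e.
Qed.

End Comb.

Section Glue.
Variable n : nat.
Hypothesis hn : (3 <= n)%N.

Lemma wt_mono N (A B : {set 'I_N}) a : A \subset B -> (wt A a <= wt B a)%N.
Proof.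
move=> sub; rewrite /wt (big_mkcond (fun i => i \in A)) (big_mkcond (fun i => i \in B)) /=.
apply: leq_sum => i _; case: ifP => // iA; by rewrite (subsetP sub i iA).
Qed.

Lemma wtU1 N (S : {set 'I_N}) z a : z \notin S -> wt (z |: S) a = (\sum_(i in S) a i + a z)%N.
Proof. by move=> zS; rewrite /wt big_setU1 //= addnC. Qed.

Lemma facet_char (F : {set 'I_n.+2}) : bipyr_face F ->
  (forall v, v \notin F -> ~~ bipyr_face (v |: F)) ->
  exists x i j, [/\ x = ord0 \/ x = ord_max, polyadj i j & F = [set x; i; j]].
Proof.
move=> /existsP[i /existsP[j /andP[adj hor]]] hmax.
have key : forall x, (x = ord0 \/ x = ord_max) -> F \subset [set x; i; j] -> F = [set x; i; j].
  move=> x hx sub; apply/eqP; rewrite eqEsubset sub /=.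
  apply/subsetP => v vG; apply/negPn/negP => vF.
  have [fG _] := facet_props hn hx adj.
  move: (hmax v vF); rewrite (bface_down fG) //.
  by apply/subsetP => w; rewrite in_setU1 => /orP[/eqP ->|/(subsetP sub)].
case/orP: hor => sub.
- by exists ord0, i, j; split=> //; [left | apply: key => //; left].
- by exists ord_max, i, j; split=> //; [right | apply: key => //; right].
Qed.


Lemma compl_eq (S : {set 'I_n.+2}) i j x x' : S \subset PVs n -> PVs n :\: S = [set i; j] ->
  (x = ord0 /\ x' = ord_max \/ x = ord_max /\ x' = ord0) ->
  ~: [set x; i; j] = x' |: S.
Proof.
move=> SP e hxx'.
have E' : PVs n :\: S =i [set i; j] by apply/setP.
have Pi : polyV i by have := E' i; rewrite !inE eqxx /= => /andP[].
have Pj : polyV j by have := E' j; rewrite !inE eqxx orbT /= => /andP[].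
have [i0 iM] := PV_ne hn Pi; have [j0 jM] := PV_ne hn Pj.
have n0M : (ord0 : 'I_n.+2) != ord_max by apply/eqP => /(congr1 val).
apply/setP => v; rewrite !inE.
case: (boolP (polyV v)) => Pv.
  have [v0 vM] := PV_ne hn Pv.
  have ev := E' v; rewrite !inE Pv andbT in ev.
  case: hxx' => [[-> ->]|[-> ->]]; rewrite (negbTE v0) (negbTE vM) /=;
    by case: (v \in S) ev => /= <-.
have vS : v \notin S by apply: contra Pv => /(subsetP SP); rewrite inE.
rewrite (negbTE vS) orbF.
have vi : v != i by apply: contra Pv => /eqP ->.
have vj : v != j by apply: contra Pv => /eqP ->.
rewrite (negbTE vi) (negbTE vj) !orbF.
case: (notPV hn Pv) => ->; case: hxx' => [[-> ->]|[-> ->]]; rewrite ?eqxx //.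
all: try by rewrite n0M.
all: by rewrite eq_sym n0M.
Qed.

End Glue.

Theorem proposition3p6 (k : fieldType) (n : nat) (hn : (3 <= n)%N) (m : nat)
    (a : 'X_{1..n.+2}) :
  symbolic_power (SR_bipyr k n) m ('X_[a] : {mpoly k[n.+2]}) <->
  (forall (S : {set 'I_n.+2}) (E : {set {set 'I_n.+2}}),
     is_subtree n S E -> #|S| = (n - 2)%N ->
     (m <= minn (w0 S a) (wn1 S a))%N).
Proof.
have -> : SR_bipyr k n = @Igen k n.+2 (@bipyr_face n) by [].
have fd := @bface_down n.
split.
- move=> H S E st cS.
  have [i [j [adj e]]] := subtree_compl hn st cS.
  have SP : S \subset PVs n.
    by have [Ssub _ _ _ _] := st; apply/subsetP => v /Ssub; rewrite inE.
  have ord0S : (ord0 : 'I_n.+2) \notin S.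
    by apply/negP => /(subsetP SP); rewrite inE /polyV /=.
  have ordMS : (ord_max : 'I_n.+2) \notin S.
    by apply/negP => /(subsetP SP); rewrite inE /polyV /=; lia.
  rewrite leq_min; apply/andP; split.
  + have [f1 f2] := facet_props hn (or_intror erefl) adj.
    have := sym_to_wt fd f1 f2 H.
    by rewrite (compl_eq hn SP e (or_intror (conj erefl erefl))) wtU1 // /w0.
  + have [f1 f2] := facet_props hn (or_introl erefl) adj.
    have := sym_to_wt fd f1 f2 H.
    by rewrite (compl_eq hn SP e (or_introl (conj erefl erefl))) wtU1 // /wn1.
- move=> H; apply: (wt_to_sym fd) => F fF hF.
  have [x [i [j [hx adj eF]]]] := facet_char hn fF hF.
  have [S [E [st cS iS jS]]] : exists S E, [/\ is_subtree n S E, #|S| = (n - 2)%N, i \notin S & j \notin S].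
    have [a1 a2 a3 a4 h] := polyadj_nat adj.
    have Pi : polyV i by rewrite /polyV a1 a2.
    have Pj : polyV j by rewrite /polyV a3 a4.
    case: h => [h|h|[h1 h2]|[h1 h2]].
    + have ilt : (i < n)%N by lia.
      have [S [E [? ? ? ?]]] := path_from hn Pi (or_introl (conj h ilt)).
      by exists S, E.
    + have jlt : (j < n)%N by lia.
      have [S [E [? ? ? ?]]] := path_from hn Pj (or_introl (conj h jlt)).
      by exists S, E.
    + have [S [E [? ? ? ?]]] := path_from hn Pj (or_intror (conj h2 h1)).
      by exists S, E.
    + have [S [E [? ? ? ?]]] := path_from hn Pi (or_intror (conj h1 h2)).
      by exists S, E.
  have SP : S \subset PVs n.
    by have [Ssub _ _ _ _] := st; apply/subsetP => v /Ssub; rewrite inE.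
  have ord0S : (ord0 : 'I_n.+2) \notin S.
    by apply/negP => /(subsetP SP); rewrite inE /polyV /=.
  have ordMS : (ord_max : 'I_n.+2) \notin S.
    by apply/negP => /(subsetP SP); rewrite inE /polyV /=; lia.
  have hm := H S E st cS; rewrite leq_min in hm; case/andP: hm => hm0 hm1.
  have n0M : (ord0 : 'I_n.+2) != ord_max by apply/eqP => /(congr1 val).
  have [a1 a2 a3 a4 _] := polyadj_nat adj.
  have Pi : polyV i by rewrite /polyV a1 a2.
  have Pj : polyV j by rewrite /polyV a3 a4.
  have [i0 iM] := PV_ne hn Pi; have [j0 jM] := PV_ne hn Pj.
  rewrite eF; case: hx => ->.
  + apply: leq_trans hm1 _; rewrite /wn1 -wtU1 //; apply: wt_mono.
    apply/subsetP => v; rewrite in_setU1 !inE => /orP[/eqP ->|vS].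
    * by rewrite [ord_max == ord0]eq_sym (negbTE n0M) [ord_max == i]eq_sym (negbTE iM) [ord_max == j]eq_sym (negbTE jM).
    * apply/negP => /orP[/orP[/eqP e|/eqP e]|/eqP e]; subst v.
      - by rewrite vS in ord0S.
      - by rewrite vS in iS.
      - by rewrite vS in jS.
  + apply: leq_trans hm0 _; rewrite /w0 -wtU1 //; apply: wt_mono.
    apply/subsetP => v; rewrite in_setU1 !inE => /orP[/eqP ->|vS].
    * by rewrite (negbTE n0M) [ord0 == i]eq_sym (negbTE i0) [ord0 == j]eq_sym (negbTE j0).
    * apply/negP => /orP[/orP[/eqP e|/eqP e]|/eqP e]; subst v.
      - by rewrite vS in ordMS.
      - by rewrite vS in iS.
      - by rewrite vS in jS.
Qed.
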